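(* Let $f_\mu:\mathbb{R}^d\to[0,\infty)$ be measurable and satisfy $$\sum_{r\ge1}r^{d-1}\sup_{x\in\mathbb{R}^d\setminus B(0,r-1)}f_\mu(x)<\infty.$$ Then there exists a constant $C>0$ such that for every affine hyperplane $\mathcal H\subset\mathbb{R}^d$, $$\int_{\mathcal H}f_\mu(x)\,d\mathcal H^{d-1}(x)\le C.$$
   Context: $\mathcal H^{d-1}$ denotes the $(d-1)$-dimensional Hausdorff measure on $\mathbb{R}^d$; $B(0,r)$ is the Euclidean ball of radius $r$ centered at $0$. *)

(* Defs.v *)
(* Points of R^d are d-tuples of reals
   (d.-tuple R carries the product = Borel sigma-algebra of R^d). *)
From HB Require Import structures.
From mathcomp Require Import all_boot all_order all_algebra.
From mathcomp Require Import all_classical all_reals all_analysis.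

Set Implicit Arguments.
Unset Strict Implicit.
Unset Printing Implicit Defensive.

Import Order.TTheory GRing.Theory Num.Theory.
Local Open Scope classical_set_scope.
Local Open Scope ring_scope.

Section Defs.
Variables (R : realType) (d : nat).
Local Notation V := (d.-tuple R).

Definition dotp (x y : V) : R := \sum_(i < d) tnth x i * tnth y i.
Definition enorm (x : V) : R := Num.sqrt (\sum_(i < d) tnth x i ^+ 2).
Definition edist (x y : V) : R :=
  Num.sqrt (\sum_(i < d) (tnth x i - tnth y i) ^+ 2).

Definition eball0 (r : R) : set V := [set x | enorm x < r].

Definition hyperplane (a : V) (b : R) : set V := [set x | dotp a x = b].

(* diameter (diam of the empty set taken to be 0) *)
Definition ediam (C : set V) : \bar R :=
  ereal_sup ([set 0%:E] `|` [set (edist x y)%:E | x in C & y in C]).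

Definition haus_term (s : nat) (C : set V) : \bar R :=
  if pselect (C = set0) then 0%E else ((fine (ediam C) / 2) ^+ s)%:E.

Definition hausdorff_delta (s : nat) (delta : R) (A : set V) : \bar R :=
  ereal_inf [set (\sum_(0 <= i <oo) haus_term s (C i))%E |
    C in [set C : nat -> set V |
          A `<=` \bigcup_i C i /\ forall i, (ediam (C i) <= delta%:E)%E]].

(* s-dimensional Hausdorff (outer) measure: H^s(A) = lim_{delta->0+}
   H^s_delta(A) = sup_{delta>0} H^s_delta(A) (monotone in delta).
   (unnormalized: the constant omega_s is taken to be 1) *)
Definition hausdorff (s : nat) (A : set V) : \bar R :=
  ereal_sup [set hausdorff_delta s delta A | delta in [set delta : R | 0 < delta]].

(* integral of a nonnegative f over the set S w.r.t. H^s, via the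
   layer-cake formula  int_S f dH^s = int_0^oo H^s(S /\ {f > t}) dt *)
Definition hausdorff_integral (s : nat) (S : set V) (f : V -> R) : \bar R :=
  (\int[@lebesgue_measure R]_(t in [set t : R | (0 <= t)%R])
      hausdorff s (S `&` [set x | (t < f x)%R]))%E.

End Defs.

(* Main.v *)
Require Import Defs.
From HB Require Import structures.
From mathcomp Require Import all_boot all_order all_algebra.
From mathcomp Require Import all_classical all_reals all_analysis.
From mathcomp Require Import measurable_realfun.
From mathcomp Require Import ring lra.

Set Implicit Arguments.
Unset Strict Implicit.
Unset Printing Implicit Defensive.
Import Order.TTheory GRing.Theory Num.Theory.
Local Open Scope classical_set_scope.
Local Open Scope ring_scope.
Section Geo.
Variables (R : realType) (d : nat).
Local Notation V := (d.-tuple R).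

Lemma coord_le_enorm (x : V) i : `|tnth x i| <= enorm x.
Proof.
rewrite /enorm -(sqrtr_sqr (tnth x i)) ler_sqrt; last first.
  by apply: sumr_ge0 => j _; rewrite sqr_ge0.
rewrite (bigD1 i) //= lerDl; apply: sumr_ge0 => j _; exact: sqr_ge0.
Qed.

Lemma ediam_ge0 (C : set V) : (0 <= ediam C)%E.
Proof. by apply: ereal_sup_ubound; left. Qed.

Lemma ediam_le (C : set V) (D : R) : 0 <= D ->
  (forall x y, C x -> C y -> Defs.edist x y <= D) -> (ediam C <= D%:E)%E.
Proof.
move=> D0 H; apply: ge_ereal_sup => z [->|[x Cx [y Cy <-]]].
  by rewrite lee_fin.
by rewrite lee_fin H.
Qed.

Lemma haus_term_ge0 s (C : set V) : (0 <= haus_term s C)%E.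
Proof.
rewrite /haus_term; destruct (pselect (C = set0)) => //; rewrite lee_fin exprn_ge0 //.
by rewrite divr_ge0 // fine_ge0 // ediam_ge0.
Qed.

Lemma haus_term_le s (C : set V) (D : R) : 0 <= D ->
  (forall x y, C x -> C y -> Defs.edist x y <= D) ->
  (haus_term s C <= ((D / 2) ^+ s)%:E)%E.
Proof.
move=> D0 H; rewrite /haus_term; destruct (pselect (C = set0)).
  by rewrite lee_fin exprn_ge0 // divr_ge0.
have h1 := ediam_le D0 H; have h0 := ediam_ge0 C.
rewrite lee_fin lerXn2r // ?nnegrE ?divr_ge0 ?fine_ge0 //.
rewrite ler_pM2r //; move: h1 h0; case: (ediam C) => //= e; by rewrite !lee_fin.
Qed.

Lemma hausdorff_ge0 s (A : set V) : (0 <= hausdorff s A)%E.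
Proof.
apply: (@le_trans _ _ (hausdorff_delta s 1 A)); last first.
  by apply: ereal_sup_ubound; exists 1 => //; exact: ltr01.
apply: le_ereal_inf_tmp => _ [C _ <-]; apply: nneseries_ge0 => n _ _.
exact: haus_term_ge0.
Qed.

Lemma hausdorff_set0 s (A : set V) : A `<=` set0 -> (hausdorff s A <= 0)%E.
Proof.
move=> A0; apply: ge_ereal_sup => _ [delta d0 <-].
apply: (@le_trans _ _ (\sum_(0 <= i <oo) haus_term s (@set0 V))%E).
  apply: ereal_inf_lbound; exists (fun=> set0) => //; split => //.
  by move=> x /A0.
  by move=> i; apply: le_trans (ediam_le (le_refl (0:R)) _) _ => //; rewrite lee_fin ltW.
rewrite eseries0 // => i _ _; rewrite /haus_term; destruct (pselect (@set0 V = set0)) => //.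
Qed.

Lemma hyp_coord (a x y : V) b (k : 'I_d) (h : R) : tnth a k != 0 ->
  (forall i, `|tnth a i| <= `|tnth a k|) -> 0 <= h ->
  dotp a x = b -> dotp a y = b ->
  (forall i, i != k -> `|tnth x i - tnth y i| <= h) ->
  `|tnth x k - tnth y k| <= d%:R * h.
Proof.
move=> ak0 amax h0 hx hy hxy.
have E : \sum_(i < d) tnth a i * (tnth x i - tnth y i) = 0.
  under eq_bigr do rewrite mulrBr.
  by rewrite sumrB -/(dotp a x) -/(dotp a y) hx hy subrr.
move: E; rewrite (bigD1 k) //= => /eqP; rewrite addr_eq0 => /eqP E.
have akp : 0 < `|tnth a k| by rewrite normr_gt0.
rewrite -(ler_pM2l akp) -normrM E normrN.
apply: (le_trans (ler_norm_sum _ _ _)).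
apply: (@le_trans _ _ (\sum_(i < d | i != k) `|tnth a k| * h)).
  apply: ler_sum => i ik; rewrite normrM ler_pM //; exact: hxy.
apply: (@le_trans _ _ (\sum_(i < d) `|tnth a k| * h)).
  rewrite [X in _ <= X](bigD1 k) //= lerDr mulr_ge0 //.
rewrite sumr_const card_ord -mulr_natr; lra.
Qed.

Lemma edist_le (x y : V) (c : R) : 0 <= c -> (0 < d)%N ->
  (forall i, `|tnth x i - tnth y i| <= d%:R * c) ->
  Defs.edist x y <= d%:R ^+ 2 * c.
Proof.
move=> c0 d0 H; rewrite /Defs.edist.
have dc0 : 0 <= d%:R ^+ 2 * c by rewrite mulr_ge0 // exprn_ge0.
rewrite -(ger0_norm dc0) -sqrtr_sqr ler_sqrt ?exprn_ge0 //.
apply: (@le_trans _ _ (\sum_(i < d) (d%:R * c) ^+ 2)).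
  apply: ler_sum => i _; rewrite -real_normK ?num_real //.
  rewrite lerXn2r // ?nnegrE ?mulr_ge0 //.
rewrite sumr_const card_ord -[_ *+ d]mulr_natl.
have d1 : (1 : R) <= d%:R by rewrite ler1n.
have h3 : 0 <= d%:R ^+ 3 * c ^+ 2 * (d%:R - 1) :> R.
  by rewrite !mulr_ge0 ?exprn_ge0 ?subr_ge0 // (le_trans ler01).
rewrite -subr_ge0; apply: (le_trans h3); rewrite le_eqVlt; apply/orP; left; apply/eqP; ring.
Qed.

Lemma hausdorff_plane (a : V) (b r : R) (k : 'I_d) (A : set V) :
  tnth a k != 0 -> (forall i, `|tnth a i| <= `|tnth a k|) -> 0 < r ->
  A `<=` hyperplane a b `&` eball0 r ->
  (hausdorff d.-1 A <= ((d%:R ^+ 2 * r) ^+ d.-1)%:E)%E.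
Proof.
move=> ak0 amax r0 AP.
have d0 : (0 < d)%N by apply: leq_ltn_trans (ltn_ord k).
apply: ge_ereal_sup => _ [delta d0' <-]; move: d0' => /= dl0.
pose N := Num.truncn (2 * d%:R ^+ 2 * r / delta).
pose M := N.+1.
pose h := 2 * r / M%:R.
have Mp : (0 : R) < M%:R by rewrite ltr0n.
have h0 : 0 < h by rewrite /h divr_gt0 // mulr_gt0.
have hM : h * M%:R = 2 * r by rewrite /h divfK // gt_eqF.
have hdl : d%:R ^+ 2 * h <= delta.
  have := truncnS_gt (2 * d%:R ^+ 2 * r / delta); rewrite -/N -/M.
  rewrite ltr_pdivrMr // => H.
  rewrite -(ler_pM2r Mp) (_ : d%:R ^+ 2 * h * M%:R = 2 * d%:R ^+ 2 * r).
    by rewrite [delta * _]mulrC; exact: ltW.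
  by rewrite -mulrA hM; ring.
pose T := {ffun {i : 'I_d | i != k} -> 'I_M}.
pose S (m : T) : set V := [set x | dotp a x = b /\
  forall j : {i : 'I_d | i != k},
    (m j)%:R * h <= tnth x (val j) + r < (m j)%:R * h + h].
pose m0 : T := [ffun => ord0].
pose C i := if (i < #|T|)%N then S (nth m0 (enum T) i) else set0.
have Sdiam m x y : S m x -> S m y -> Defs.edist x y <= d%:R ^+ 2 * h.
  move=> [hx Hx] [hy Hy]; apply: edist_le => //; first exact: ltW.
  have hi i : i != k -> `|tnth x i - tnth y i| <= h.
    move=> ik; have := Hx (exist _ i ik); have := Hy (exist _ i ik) => /=.
    rewrite ler_norml => /andP[+ +] /andP[+ +]; move=> *; apply/andP; split; lra.
  move=> i; case: (eqVneq i k) => [->|ik].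
    exact: (hyp_coord ak0 amax (ltW h0) hx hy hi).
  apply: (le_trans (hi i ik)); rewrite ler_pMl // ler1n //.
apply: (@le_trans _ _ (\sum_(0 <= i <oo) haus_term d.-1 (C i))%E).
  apply: ereal_inf_lbound; exists C => //; split.
    move=> x /AP [hx xr].
    have xb j : -r < tnth x j < r.
      by rewrite -ltr_norml; apply: le_lt_trans (coord_le_enorm x j) xr.
    have z0 j : 0 <= (tnth x j + r) / h.
      by rewrite divr_ge0 ?(ltW h0) //; have := xb j; move=> /andP[? ?]; lra.
    have lt (j : {i : 'I_d | i != k}) : (Num.truncn ((tnth x (val j) + r) / h) < M)%N.
      rewrite truncn_lt_nat // ltr_pdivrMr // mulrC hM.
      by have := xb (val j); move=> /andP[? ?]; lra.
    pose m : T := [ffun j => Ordinal (lt j)].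
    have Sm : S m x.
      split => // j; rewrite ffunE /=.
      have := truncn_itv (z0 (val j)) => /andP[H1 H2].
      move: H1; rewrite ler_pdivlMr // => ->; move: H2.
      by rewrite ltr_pdivrMr // -natr1 mulrDl mul1r.
    exists (index m (enum T)) => //; rewrite /C.
    have -> : (index m (enum T) < #|T|)%N by rewrite cardE index_mem mem_enum.
    by rewrite nth_index // mem_enum.
  move=> i; rewrite /C; case: ifP => _.
    apply: le_trans (ediam_le _ (Sdiam _)) _; last by rewrite lee_fin.
    by rewrite mulr_ge0 // ?exprn_ge0 // ltW.
  by apply: le_trans (ediam_le (le_refl (0:R)) _) _ => //; rewrite lee_fin ltW.
have Dge0 : 0 <= d%:R ^+ 2 * h by rewrite mulr_ge0 // ?exprn_ge0 // ltW.
have Cdiam i x y : C i x -> C i y -> Defs.edist x y <= d%:R ^+ 2 * h.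
  by rewrite /C; case: ifP => _; [exact: Sdiam|].
rewrite (@nneseries_split _ _ 0 #|T|); last by move=> *; exact: haus_term_ge0.
rewrite add0n eseries0 ?adde0; last first.
  move=> i iT _; rewrite /C ltnNge iT /= /haus_term.
  by destruct (pselect (@set0 V = set0)).
apply: (@le_trans _ _ (\sum_(0 <= i < #|T|) (((d%:R ^+ 2 * h) / 2) ^+ d.-1)%:E)%E).
  by apply: lee_sum => i _; exact: haus_term_le (Cdiam i).
rewrite sumEFin lee_fin sumr_const_nat subn0.
have -> : #|T| = (M ^ d.-1)%N.
  by rewrite card_ffun card_ord card_sig cardC1 card_ord.
rewrite -[_ *+ _]mulr_natr natrX -exprMn.
have e : d%:R ^+ 2 * h / 2 * M%:R = d%:R ^+ 2 * (h * M%:R) / 2 by ring.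
rewrite e hM (_ : d%:R ^+ 2 * (2 * r) / 2 = d%:R ^+ 2 * r) //; field.
by [].
Qed.
End Geo.

Section Ser.
Variable R : realType.
Local Open Scope ereal_scope.

Lemma term_le_nneseries (u : (\bar R)^nat) r : (forall i, 0 <= u i) ->
  u r <= \sum_(i <oo) u i.
Proof.
move=> u0; apply: le_trans (nneseries_lim_ge r.+1 (fun i _ _ => u0 i)).
rewrite big_nat_recr //= leeDr //; exact: sume_ge0.
Qed.

Lemma nneseries_ge1_pinfty (u : (\bar R)^nat) : (forall i, 0 <= u i) ->
  (forall i, (1 <= i)%N -> 1 <= u i) -> \sum_(i <oo) u i = +oo.
Proof.
move=> u0 u1.
have ps n : (n%:R)%:E <= \sum_(0 <= i < n.+1) u i.
  elim: n => [|n IH]; first by rewrite big_nat_recr //= big_geq // add0e u0.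
  rewrite big_nat_recr //= -natr1 EFinD; apply: leeD => //; exact: u1.
have sn n : (n%:R)%:E <= \sum_(i <oo) u i.
  exact: le_trans (ps n) (nneseries_lim_ge n.+1 (fun i _ _ => u0 i)).
have s0 := sn 0%N.
move: s0 sn; case: (\sum_(i <oo) u i) => // c _ sn.
have := sn (Num.truncn c).+1; rewrite lee_fin => H.
have := truncnS_gt c; rewrite ltNge H //.
Qed.
End Ser.

Unset Implicit Arguments.
Set Strict Implicit.

Theorem lemmaF2 (R : realType) (d : nat) (f : d.-tuple R -> R) :
  (0 < d)%N ->
  measurable_fun setT f ->
  (forall x, 0 <= f x) ->
  (\sum_(1 <= r <oo)
      ((r ^ d.-1)%:R%:E *
       ereal_sup [set (f x)%:E | x in ~` eball0 (r%:R - 1)]) < +oo)%E ->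
  exists C : R, 0 < C /\
    forall (a : d.-tuple R) (b : R), (exists i, tnth a i != 0) ->
      (hausdorff_integral d.-1 (hyperplane a b) f <= C%:E)%E.
Proof.
move=> d0 _ f0 Hs.
pose Msup (r : nat) := ereal_sup [set (f x)%:E | x in ~` eball0 (r%:R - 1)].
pose i0 : 'I_d := Ordinal d0.
have Mge0 r : (0 <= Msup r)%E.
  apply: le_trans (_ : (f [tuple (r%:R : R) | i < d])%:E <= _)%E.
    by rewrite lee_fin.
  apply: ereal_sup_ubound; exists [tuple (r%:R : R) | i < d] => //.
  rewrite /eball0 /= => /(le_lt_trans (coord_le_enorm _ i0)).
  by rewrite tnth_mktuple ger0_norm // ?ler0n //; lra.
pose S := (\sum_(1 <= r <oo) ((r ^ d.-1)%:R%:E * Msup r))%E.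
have HS : (S < +oo)%E := Hs.
have Yge0 r : (0 <= (r ^ d.-1)%:R%:E * Msup r)%E by rewrite mule_ge0 // lee_fin.
have S0 : (0 <= S)%E by apply: nneseries_ge0 => *.
have SE : S = (\sum_(r <oo) (if (1 <= r)%N then (r ^ d.-1)%:R%:E * Msup r else 0))%E.
  by rewrite /S ereal_series eseries_mkcond.
have Mfin r : (1 <= r)%N -> (Msup r < +oo)%E.
  move=> r1.
  have := @term_le_nneseries R
    (fun i => if (1 <= i)%N then ((i ^ d.-1)%:R%:E * Msup i)%E else 0%E) r.
  rewrite -SE r1 => H.
  have {H} := le_lt_trans (H (fun i => ltac:(by case: ifP))) HS.
  rewrite !ltey; apply: contra => /eqP ->.
  by rewrite mulry gtr0_sg ?mul1e // ltr0n expn_gt0 r1.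
pose m r := fine (Msup r).
have Mm r : (1 <= r)%N -> Msup r = (m r)%:E.
  by move=> r1; rewrite fineK // ge0_fin_numE // Mfin.
have m0 r : 0 <= m r by apply: fine_ge0.
have fle r x : (1 <= r)%N -> ~~ (enorm x < r%:R - 1) -> f x <= m r.
  move=> r1 xr; rewrite -lee_fin -Mm //; apply: ereal_sup_ubound; exists x => //.
  exact/negP.
pose c : R := (d%:R ^+ 2) ^+ d.-1.
have c0 : 0 <= c by rewrite exprn_ge0 // exprn_ge0.
exists (c * fine S + 1); split.
  by rewrite ltr_pwDr // mulr_ge0 // fine_ge0.
move=> a b [j aj].
have [k _ kmax] : exists2 k : 'I_d, true & forall i, `|tnth a i| <= `|tnth a k|.
  case: (@arg_maxP _ _ _ j xpredT (fun i => `|tnth a i|) isT) => k _ H.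
  by exists k => // i; exact: H.
have ak0 : tnth a k != 0.
  by rewrite -normr_gt0; apply: lt_le_trans (kmax j); rewrite normr_gt0.
pose K (r : nat) : R := (d%:R ^+ 2 * r%:R) ^+ d.-1.
have K0 r : 0 <= K r by rewrite exprn_ge0 // mulr_ge0 // exprn_ge0.
pose A (r : nat) : set R := `[0, m r[%classic.
have mA r : measurable (A r) by exact: measurable_itv.
pose gg (r : nat) (t : R) : \bar R :=
  if (1 <= r)%N then ((K r)%:E * (\1_(A r) t)%:E)%E else 0%E.
have gg0 r t : (0 <= gg r t)%E.
  by rewrite /gg; case: ifP => // _; rewrite mule_ge0 // lee_fin.
pose D : set R := [set t | 0 <= t].
have mD : measurable D.
  rewrite (_ : D = `[0, +oo[%classic); first exact: measurable_itv.
  by apply/seteqP; split => x /=; rewrite in_itv /= andbT.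
pose G t := (\sum_(r <oo) gg r t)%E.
have G0 t : (0 <= G t)%E by apply: nneseries_ge0 => *.
have hG t : D t ->
    (hausdorff d.-1 (hyperplane a b `&` [set x | (t < f x)%R]) <= G t)%E.
  rewrite /D /= => t0.
  have K1 i : (1 <= i)%N -> 1 <= K i.
    move=> i1; rewrite /K exprn_ege1 // -natrX -natrM ler1n muln_gt0 expn_gt0 d0.
    by case: i i1.
  have ggE i : (1 <= i)%N -> t < m i -> gg i t = (K i)%:E.
    move=> i1 ti; rewrite /gg i1 indicE mem_set ?mule1 //.
    by rewrite /A /= in_itv /= t0 ti.
  case: (pselect (exists r, (1 <= r)%N && (m r <= t))) => [ex|nex].
  - case: (ex_minnP ex) => r0 /andP[r01 mr0] rmin.
    have sub : hyperplane a b `&` [set x | (t < f x)%R] `<=`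
               hyperplane a b `&` eball0 (r0%:R - 1).
      move=> x [hx tx]; split => //; rewrite /eball0 /=.
      case: (ltP (enorm x) (r0%:R - 1)) => // H'.
      have := fle r0 x r01 (ltac:(by rewrite -leNgt)); move: tx mr0 => /= tx mr0 h.
      by have := lt_le_trans tx (le_trans h mr0); rewrite ltxx.
    case: r0 r01 mr0 rmin sub => [//|[|r1]] _ mr0 rmin sub.
    + apply: le_trans (G0 t); apply: hausdorff_set0 => x /sub [_].
      rewrite /eball0 /= mulr1n subrr => h.
      by have := le_lt_trans (sqrtr_ge0 _) h; rewrite ltxx.
    + have tm : t < m r1.+1.
        rewrite ltNge; apply/negP => h.
        by have := rmin r1.+1 (ltac:(by rewrite h)); rewrite ltnn.
      have e : (r1.+2)%:R - 1 = (r1.+1)%:R :> R by rewrite mulrSr addrK.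
      rewrite e in sub.
      apply: le_trans (hausdorff_plane ak0 kmax _ sub) _; first by rewrite ltr0n.
      rewrite -/(K r1.+1) -ggE //.
      exact: (@term_le_nneseries R (gg ^~ t) r1.+1 (fun i => gg0 i t)).
  - suff -> : G t = +oo%E by exact: leey.
    apply: nneseries_ge1_pinfty => // i i1. rewrite ggE ?lee_fin ?K1 //.
    rewrite ltNge; apply/negP => h; apply: nex; exists i; by rewrite i1 h.
have IG : (\int[lebesgue_measure]_(t in D) G t = c%:E * S)%E.
  have Ig n : (\int[lebesgue_measure]_(t in D) gg n t =
      if (1 <= n)%N then (K n)%:E * (m n)%:E else 0)%E.
    rewrite /gg; case: ifP => _; last by rewrite integral0_eq.
    rewrite ge0_integralZl_EFin //; last first.
      by apply/measurable_EFinP; exact: (measurable_indic (mA n)).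
    rewrite integral_indic //; last exact: mA.
    apply: congr1.
    have AD : A n `<=` D by move=> x; rewrite /A /= in_itv /= => /andP[].
    rewrite (setIidl AD); apply: eq_trans (lebesgue_measure_itv `[0, m n[) _ => /=.
    rewrite lte_fin; have := m0 n; rewrite le_eqVlt => /orP[/eqP <-|->].
      by rewrite ltxx.
    by rewrite oppr0 adde0.
  rewrite /G integral_nneseries //; last first.
  - move=> n; rewrite /gg; case: (1 <= n)%N; last exact: measurable_cst.
    apply/measurable_EFinP.
    apply: measurable_funM; [exact: measurable_cst|exact: (measurable_indic (mA n))].
  rewrite (eq_eseriesr (fun n _ => Ig n)) SE -nneseriesZl; last by move=> i _; case: ifP.
  apply: eq_eseriesr => n _; case: ifP => n1; last by rewrite mule0.
  rewrite Mm // muleA -EFinM /K exprMn natrX //.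
have Sfin : S = (fine S)%:E by rewrite fineK // ge0_fin_numE.
rewrite /hausdorff_integral.
apply: le_trans (_ : _ <= \int[lebesgue_measure]_(t in D) G t)%E _.
  rewrite ge0_integralE; last by move=> *; exact: hausdorff_ge0.
  rewrite ge0_integralE; last by move=> *; exact: G0.
  apply: le_ereal_sup => _ [g Hg <-]; exists g => // x.
  apply: le_trans (Hg x) _; rewrite /patch; case: ifP => // /set_mem Dx.
  exact: hG.
by rewrite IG Sfin -EFinM lee_fin lerDl.
Qed.
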